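(* Let $q$ be a prime power, $L$ an integer with $1\le L<q$, and $r\in[0,\frac{L}{L+1})$ with $rn\in\mathbb{N}$. If $C\subseteq\mathbb{F}_q^n$ is a linear $[n,k]_q$ code that is $(r,L)$ list-decodable with $k=n-\lceil\frac{L+1}{L}rn\rceil$, then $d(C)\ge n-k$. Moreover, if $L\mid rn$ then $d(C)\ge n-k+1$, i.e. $C$ is MDS.
   Context: A linear $[n,k]_q$ code is a $k$-dimensional subspace of $\mathbb{F}_q^n$; $d(C)$ is its minimum Hamming distance; MDS means $d(C)=n-k+1$. $C$ is $(r,L)$ list-decodable if every Hamming ball of radius $rn$ in $\mathbb{F}_q^n$ contains at most $L$ codewords. *)

(* Defs.v *)
From HB Require Import structures.
From mathcomp Require Import all_boot all_order all_algebra.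
Set Implicit Arguments. Unset Strict Implicit. Unset Printing Implicit Defensive.
Import Order.TTheory GRing.Theory Num.Theory.

Definition hdist (F : finFieldType) (n : nat) (x y : 'rV[F]_n) : nat :=
  #|[set i : 'I_n | x ord0 i != y ord0 i]|.

(* C is (r,L) list-decodable, with e = r n the (integral) radius:
   every Hamming ball of radius e contains at most L codewords. *)
Definition list_decodable (F : finFieldType) (n : nat)
    (C : {vspace 'rV[F]_n}) (e L : nat) : Prop :=
  forall y : 'rV[F]_n, #|[set c : 'rV[F]_n | (c \in C) && (hdist c y <= e)]| <= L.

Definition min_dist_ge (F : finFieldType) (n : nat)
    (C : {vspace 'rV[F]_n}) (d : nat) : Prop :=
  forall x y, x \in C -> y \in C -> x != y -> d <= hdist x y.

(* Main.v *)
Require Import Defs.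
From HB Require Import structures.
From mathcomp Require Import all_boot all_order all_algebra.
From mathcomp Require Import zify.
Import Order.TTheory GRing.Theory Num.Theory.

Lemma part_exists (n K d : nat) (S : {set 'I_n}) :
  (K * d <= #|S|)%N ->
  exists g : 'I_n -> nat, forall j, (j < K)%N -> (d <= #|[set i in S | g i == j]|)%N.
Proof.
elim: K S => [|K IH] S HS.
  by exists (fun _ => 0%N).
have Hd : (d <= #|S|)%N by move: HS; rewrite mulSn; lia.
have [s [us ss subs]] := card_geqP Hd.
pose T := [set x in s].
have cT : #|T| = d by rewrite cardsE (card_uniqP us).
have TS : T \subset S by apply/subsetP => x; rewrite inE => /subs.
have HS' : (K * d <= #|S :\: T|)%N by rewrite cardsD (setIidPr TS) cT; move: HS; rewrite mulSn; lia.
have [g Hg] := IH (S :\: T) HS'.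
exists (fun i => if i \in T then K else g i) => j Hj.
case: (eqVneq j K) => [->|jK].
  rewrite -cT; apply: subset_leq_card; apply/subsetP => x xT.
  by rewrite inE xT eqxx (subsetP TS _ xT).
have jK' : (j < K)%N by lia.
apply: (leq_trans (Hg j jK')); apply: subset_leq_card; apply/subsetP => x.
rewrite !inE => /andP [/andP [xT xS] /eqP gx].
by rewrite xS (negbTE xT) gx eqxx.
Qed.
Local Open Scope ring_scope.
Lemma noshort (F : finFieldType) (n : nat) (C : {vspace 'rV[F]_n}) (e L : nat)
  (z : 'rV[F]_n) :
  (L < #|F|)%N -> z \in C -> z != 0%R ->
  (L * #|[set i | z ord0 i != 0%R]| <= L.+1 * e)%N -> list_decodable C e L -> False.
Proof.
move=> LF zC z0 Hw HL.
set S := [set i | z ord0 i != 0%R] in Hw *.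
have Hd : (L.+1 * (#|S| - e) <= #|S|)%N by nia.
have [g Hg] := @part_exists n _ _ _ Hd.
pose a j := nth 0%R (enum F) j.
have ainj : forall i j, (i < #|F|)%N -> (j < #|F|)%N -> a i = a j -> i = j.
  move=> i j Hi Hj /eqP; rewrite /a nth_uniq ?enum_uniq -?cardE //; by move/eqP.
pose y : 'rV[F]_n := \row_i (a (g i) * z ord0 i)%R.
have := HL y.
pose f (j : 'I_L.+1) := (a j *: z)%R.
have finj : injective f.
  move=> i j /eqP; rewrite /f -subr_eq0 -scalerBl scaler_eq0 (negbTE z0) orbF subr_eq0.
  move/eqP/ainj => H; apply/val_inj/H; have := ltn_ord i; have := ltn_ord j; lia.
move=> HH; suff H2 : (L.+1 <= #|[set c | (c \in C) && (hdist c y <= e)%N]|)%N.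
  by have := leq_trans H2 HH; rewrite ltnn.
rewrite -[in X in (X <= _)%N](card_ord L.+1) -(card_imset _ finj).
apply: subset_leq_card; apply/subsetP => c /imsetP [j _ ->].
rewrite inE memvZ //=.
rewrite /hdist.
apply: (@leq_trans #|S :\: [set i in S | g i == j]|).
  apply: subset_leq_card; apply/subsetP => i.
  rewrite !inE !mxE.
  case: (eqVneq (z ord0 i) 0%R) => [->|zi]; first by rewrite !mulr0 eqxx.
  case: (eqVneq (g i) (val j)) => [->|]; first by rewrite eqxx.
  by [].
rewrite cardsD (setIidPr _); last by apply/subsetP => i; rewrite inE => /andP [].
move: (Hg j (ltn_ord j)); rewrite leq_subLR addnC -leq_subLR; exact.
Qed.

Lemma md_of (F : finFieldType) (n : nat) (C : {vspace 'rV[F]_n}) (e L b : nat) :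
  (L < #|F|)%N -> list_decodable C e L ->
  (forall w, (w < b)%N -> (L * w <= L.+1 * e)%N) -> min_dist_ge C b.
Proof.
move=> LF HL Hb x y xC yC xy; rewrite leqNgt; apply/negP => Hlt.
have Hd : hdist x y = #|[set i | (x - y) ord0 i != 0]|.
  by rewrite /hdist; apply: eq_card => i; rewrite !inE !mxE subr_eq0.
rewrite Hd in Hlt.
apply: (@noshort F n C e L (x - y) LF (memvB xC yC) _ (Hb _ Hlt) HL).
by rewrite subr_eq0.
Qed.
Local Close Scope ring_scope.

Theorem corollary6p5 (F : finFieldType) (n L k e : nat) (r : rat)
    (C : {vspace 'rV[F]_n}) :
  (1 <= L)%N -> (L < #|F|)%N ->
  (0 <= r)%R -> (r < (L%:R / (L.+1)%:R))%R ->
  (r * n%:R = e%:R)%R ->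
  \dim C = k ->
  (k%:Z = n%:Z - Num.ceil ((L.+1)%:R / L%:R * r * n%:R))%R ->
  list_decodable C e L ->
  min_dist_ge C (n - k) /\ ((L %| e)%N -> min_dist_ge C (n - k + 1)).
Proof.
move=> L1 LF r0 rlt hre hdim hk HL.
have hX : ((L.+1)%:R / L%:R * r * n%:R = (L.+1 * e)%:R / L%:R :> rat)%R.
  by rewrite -mulrA hre mulrAC natrM.
rewrite hX in hk.
have c0 : (0 <= Num.ceil ((L.+1 * e)%:R / L%:R : rat))%R.
  rewrite -(@ceil0 rat); apply: le_ceil; apply: divr_ge0; apply: ler0n.
have hc : Num.ceil ((L.+1 * e)%:R / L%:R : rat) = Posz (n - k)%N by lia.
have L0 : (0 < L%:R :> rat)%R by rewrite ltr0n.
split.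
  apply: (@md_of F n C e L) => // w Hw.
  have : (w%:Z < Num.ceil ((L.+1 * e)%:R / L%:R : rat))%R by rewrite hc ltz_nat.
  rewrite ceil_gt_int ltr_pdivlMr // -natrM ltr_nat => H.
  by rewrite mulnC; apply: ltnW.
move/dvdnP => [m hm].
apply: (@md_of F n C e L) => // w Hw.
have hm' : ((L.+1 * e)%:R / L%:R = (L.+1 * m)%:R :> rat)%R.
  by rewrite hm mulnA natrM mulfK // lt0r_neq0.
rewrite hm' (intrKceil (Posz (L.+1 * m))) in hc.
have hc' : (L.+1 * m = n - k)%N by case: hc.
rewrite hm; nia.
Qed.
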